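(* Every Extended Bassian group is relatively Hopfian; that is, $\mathcal{EB}\subseteq\mathcal{RH}$.
   Context: All groups are abelian. A group $G$ is Bassian if there is no nonzero subgroup $H\le G$ with an injective homomorphism $G\to G/H$. A group $G$ is Extended Bassian ($G\in\mathcal{EB}$) if $G=B\oplus D$ where $B$ is Bassian and $D=\bigoplus_{p\ \text{prime}}\mathbb{Z}(p^\infty)^{(n_p)}$ with every $n_p$ finite ($\mathbb{Z}(p^\infty)$ the quasi-cyclic $p$-group, $A^{(n)}$ the direct sum of $n$ copies of $A$). A group $G$ is relatively Hopfian ($G\in\mathcal{RH}$) if $G$ is not isomorphic to a proper direct summand of any of its proper quotients, i.e., there is no nonzero subgroup $H\le G$ with $G/H=A\oplus C$, $C\neq0$ and $A\cong G$. *)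

(* Defs.v *)
From HB Require Import structures.
From mathcomp Require Import all_boot all_order all_algebra.
Set Implicit Arguments. Unset Strict Implicit. Unset Printing Implicit Defensive.
Import Order.TTheory GRing.Theory Num.Theory.
Local Open Scope ring_scope.

(* A quotient G/H is represented (up to isomorphism) by a
   zmodType Q together with a surjective homomorphism pi : G -> Q whose kernel
   is H (first isomorphism theorem). *)

Definition Bassian (G : zmodType) : Prop :=
  forall (Q : zmodType) (pi f : {additive G -> Q}),
    (forall q : Q, exists x : G, pi x = q) ->
    injective f ->
    forall x : G, pi x = 0 -> x = 0.

(* q is in Z[1/p], i.e. its reduced denominator is a power of p. *)
Definition padic_rat (p : nat) (q : rat) : Prop :=
  exists k : nat, denq q = (p ^ k)%N%:Z.

(* The domain F = \bigoplus_{p prime} (Z[1/p])^(n_p), coordinates indexed by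
   (p, i) with p prime and i < n p, finitely supported. *)
Definition Fdom (n : nat -> nat) (u : nat -> nat -> rat) : Prop :=
  [/\ (forall p i, padic_rat p (u p i)),
      (forall p i, (~~ prime p \/ (n p <= i)%N) -> u p i = 0)
    & exists N : nat, forall p i, (N <= p)%N -> u p i = 0].

Definition Fadd (u v : nat -> nat -> rat) : nat -> nat -> rat :=
  fun p i => u p i + v p i.

(* D is isomorphic to \bigoplus_p Z(p^oo)^(n_p) (every n_p finite), realised as
   F / K where K = \bigoplus_p Z^(n_p) (integer coordinates): there is a
   surjective homomorphism F -> D with kernel K. Note Z(p^oo) = Z[1/p]/Z. *)
Definition StdDivisible (D : zmodType) : Prop :=
  exists (n : nat -> nat) (pi : (nat -> nat -> rat) -> D),
    [/\ (forall u v, Fdom n u -> Fdom n v -> pi (Fadd u v) = pi u + pi v),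
        (forall d : D, exists u, Fdom n u /\ pi u = d)
      & (forall u, Fdom n u -> (pi u = 0 <-> forall p i, denq (u p i) = 1))].

Definition ExtBassian (G : zmodType) : Prop :=
  exists (B D : zmodType) (phi : {additive G -> (B * D)%type}),
    [/\ bijective phi, Bassian B & StdDivisible D].

(* Relatively Hopfian: there is no nonzero H <= G with G/H = A (+) C,
   C <> 0, A ~= G.  Here G/H is Q (via pi, H = ker pi), A is the image of an
   injective homomorphism f : G -> Q, and C is a subgroup of Q with
   Q = A (+) C internally. *)
Definition RelHopfian (G : zmodType) : Prop :=
  forall (Q : zmodType) (pi f : {additive G -> Q}) (C : {pred Q}),
    (forall q : Q, exists x : G, pi x = q) ->
    injective f ->
    0 \in C -> {in C &, forall a b, a - b \in C} ->
    (exists c, c \in C /\ c <> 0) ->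
    (forall q : Q, exists x c, c \in C /\ q = f x + c) ->
    (forall x : G, f x \in C -> f x = 0) ->
    forall x : G, pi x = 0 -> x = 0.

(* Main.v *)
Require Import Defs.
From HB Require Import structures.
From mathcomp Require Import all_boot all_order all_algebra.
From mathcomp Require Import boolp classical_sets.
From mathcomp Require Import ring.
Set Implicit Arguments. Unset Strict Implicit. Unset Printing Implicit Defensive.
Import Order.TTheory GRing.Theory Num.Theory.
Local Open Scope ring_scope.

Definition addP (U V : zmodType) (f : U -> V) := forall x y, f (x - y) = f x - f y.

Section Pack.
Variables (U V : zmodType) (f : U -> V).
Definition addf of addP f := f.
Variable fB : addP f.
HB.instance Definition _ := GRing.isZmodMorphism.Build U V (addf fB) fB.
Lemma addP0 : f 0 = 0. Proof. exact: (raddf0 (addf fB)). Qed.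
Lemma addPD x y : f (x + y) = f x + f y. Proof. exact: (raddfD (addf fB)). Qed.
Lemma addPN x : f (- x) = - f x. Proof. exact: (raddfN (addf fB)). Qed.
Lemma addPMn x n : f (x *+ n) = f x *+ n. Proof. exact: (raddfMn (addf fB)). Qed.
End Pack.

Section Subgrp.
Variables (B : zmodType) (X : B -> Prop).
Hypotheses (X0 : X 0) (Xsub : forall a b, X a -> X b -> X (a - b)).
Lemma sgN a : X a -> X (- a). Proof. by move=> Xa; rewrite -sub0r; apply: Xsub. Qed.
Lemma sgD a b : X a -> X b -> X (a + b).
Proof. by move=> Xa Xb; rewrite -[b]opprK; apply: Xsub => //; apply: sgN. Qed.
Lemma sgMn a n : X a -> X (a *+ n).
Proof.
move=> Xa; elim: n => [|n IH]; first by rewrite mulr0n.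
by rewrite mulrS; apply: sgD.
Qed.
Lemma sgMz a k : X a -> X (a *~ k).
Proof.
move=> Xa; case: k => n; first by rewrite -pmulrn; apply: sgMn.
by rewrite NegzE mulrNz; apply/sgN; rewrite -pmulrn; apply: sgMn.
Qed.
End Subgrp.

Local Open Scope classical_set_scope.
Lemma lemS (B : zmodType) (S : B -> Prop) : S 0 ->
  (forall a b, S a -> S b -> S (a - b)) ->
  (forall s p, prime p -> S s -> exists t, S t /\ t *+ p = s) ->
  exists rho : B -> B, [/\ addP rho, forall b, S (rho b) & forall s, S s -> rho s = s].
Proof.
move=> S0 Ssub Sdiv.
pose P := fun X : set B => (forall a b, X a -> X b -> X (a - b)) /\
  (forall a, X a -> S a -> a = 0).
have Pch : forall F : set (set B), F `<=` P -> total_on F subset ->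
    P (\bigcup_(X in F) X).
  move=> F FP Ftot; split.
  - move=> a b [X FX Xa] [Y FY Yb].
    have [XY|YX] := Ftot X Y FX FY.
    + by exists Y => //; apply: (FP Y FY).1 => //; exact: XY.
    + by exists X => //; apply: (FP X FX).1 => //; exact: YX.
  - by move=> a [X FX Xa]; apply: (FP X FX).2.
have [A [[Asub Adis] Amax]] := Zorn_bigcup Pch.
have A0 : A 0.
  have [[a Aa]|nA] := pselect (exists a, A a).
    by rewrite -(subrr a); apply: Asub.
  exfalso; apply: (Amax [set 0]).
  - split; first by move=> a Aa; exfalso; apply: nA; exists a.
    by move=> /(_ 0 erefl) ?; apply: nA; exists 0.
  - by split=> [a b -> ->|a ->]; rewrite ?subrr.
pose T := fun y => exists s a, S s /\ A a /\ y = s + a.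
have T0 : T 0 by exists 0, 0; rewrite addr0.
have Tsub : forall a b, T a -> T b -> T (a - b).
  move=> _ _ [s1 [a1 [S1 [A1 ->]]]] [s2 [a2 [S2 [A2 ->]]]].
  exists (s1 - s2), (a1 - a2); split; first exact: Ssub.
  split; first exact: Asub.
  by rewrite opprD addrACA.
have TS s : S s -> T s by move=> Ss; exists s, 0; rewrite addr0.
have TA a : A a -> T a by move=> Aa; exists 0, a; rewrite add0r.
have ext : forall x, ~ A x ->
    exists a k, A a /\ S (a + x *~ k) /\ a + x *~ k <> 0.
  move=> x nAx; apply: contrapT => H.
  pose A' := fun y => exists a k, A a /\ y = a + x *~ k.
  apply: (Amax A').
  - split.
      by move=> y Ay; exists y, 0; rewrite mulr0z addr0.
    by move=> sub; apply: nAx; apply: sub; exists 0, 1; rewrite mulr1z add0r.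
  - split.
      move=> _ _ [a1 [k1 [A1 ->]]] [a2 [k2 [A2 ->]]].
      exists (a1 - a2), (k1 - k2); split; first exact: Asub.
      by rewrite mulrzBr opprD addrACA.
    move=> _ [a [k [Aa ->]]] Sy; apply: contrapT => ne; apply: H.
    by exists a, k.
have Tall : forall x, T x.
  move=> x; apply: contrapT => nTx.
  have nA y : ~ T y -> ~ A y by move=> nT Ay; apply: nT; apply: TA.
  have exP : exists k, (0 < k)%N && `[< T (x *+ k) >].
    have [a [k [Aa [Sy ny]]]] := ext x (nA x nTx).
    have Tk : T (x *~ k).
      have := Tsub _ _ (TS _ Sy) (TA _ Aa); by rewrite [a + _]addrC addrK.
    case: k Tk Sy ny => n Tk Sy ny.
      case: n Tk Sy ny => [|n] Tk Sy ny.
        by exfalso; apply: ny; move: Sy; rewrite -[Posz 0]/(0 : int)%R mulr0z addr0 => Sy; apply: Adis.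
      by exists n.+1; apply/andP; split => //; apply/asboolP; rewrite pmulrn.
    exists n.+1; apply/andP; split => //; apply/asboolP.
    by rewrite pmulrn -[x *~ _]opprK -mulrNz -NegzE; apply: (sgN T0 Tsub).
  case: (ex_minnP exP) => m /andP[m0 /asboolP Tm] mmin.
  have m1 : (1 < m)%N.
    by case: m m0 Tm {mmin} => [|[|m]] //= _; rewrite mulr1n.
  have pp : prime (pdiv m) := pdiv_prime m1.
  set p := pdiv m in pp.
  have pm : (p %| m)%N := pdiv_dvd m.
  have p1 : (1 < p)%N := prime_gt1 pp.
  set m' := (m %/ p)%N.
  have mE : m = (m' * p)%N by rewrite divnK.
  have m'lt : (m' < m)%N by rewrite ltn_Pdiv // ltnW.
  have m'0 : (0 < m')%N by rewrite divn_gt0 ?prime_gt0 // dvdn_leq // ltnW.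
  set x1 := x *+ m'.
  have nT1 : ~ T x1.
    move=> T1; have := mmin m'; rewrite m'0 /= => /(_ (asboolT T1)).
    by rewrite leqNgt m'lt.
  have T1p : T (x1 *+ p) by rewrite -mulrnA -mE.
  case: T1p => s [a [Ss [Aa e]]].
  have [t [St tp]] := Sdiv s p pp Ss.
  set x2 := x1 - t.
  have nT2 : ~ T x2.
    move=> T2; apply: nT1; have := sgD T0 Tsub T2 (TS _ St).
    by rewrite subrK.
  have A2 : A (x2 *+ p) by rewrite mulrnBl e tp [s + a]addrC addrK.
  have [a' [k [Aa' [Sy ny]]]] := ext x2 (nA x2 nT2).
  move: Sy ny; rewrite (divz_eq k p) mulrzDr (mulrC (k %/ p)%Z) mulrzA -pmulrn.
  have r0 : 0 <= (k %% p)%Z by apply: modz_ge0; rewrite eqz_nat gtn_eqF // prime_gt0.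
  have rlt : (k %% p)%Z < p by rewrite ltz_pmod // ltz_nat prime_gt0.
  move: r0 rlt; set q := (k %/ p)%Z; case: (k %% p)%Z => // r' _ rlt Sy ny.
  have A3 : A (a' + x2 *+ p *~ q) by apply: (sgD A0 Asub) => //; apply: sgMz.
  case: r' rlt Sy ny => [|r'] rlt Sy ny.
    by apply: ny; move: Sy; rewrite -[Posz 0]/(0 : int)%R mulr0z !addr0 => Sy; apply: Adis.
  have Tr : T (x2 *+ r'.+1).
    have := Tsub _ _ (TS _ Sy) (TA _ A3).
    by rewrite addrA [_ + x2 *~ _]addrC addrK pmulrn.
  have cop : coprime r'.+1 p.
    rewrite coprime_sym prime_coprime //; apply/negP => /dvdn_leq => /(_ isT).
    by rewrite leqNgt -ltz_nat rlt.
  case: (egcdnP p (ltn0Sn r')) => km kn kE _.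
  move: kE; rewrite (eqP cop) => kE.
  apply: nT2.
  have : T (x2 *+ r'.+1 *+ km - x2 *+ p *+ kn).
    apply: (Tsub); first exact: (sgMn T0 Tsub _ Tr).
    exact: (sgMn T0 Tsub _ (TA _ A2)).
  by rewrite -mulrnA mulnC kE mulrnDr mulr1n -mulrnA mulnC addrAC subrr add0r.
have Tunq : forall s1 s2 a1 a2, S s1 -> S s2 -> A a1 -> A a2 ->
    s1 + a1 = s2 + a2 -> s1 = s2.
  move=> s1 s2 a1 a2 S1 S2 A1 A2 e.
  have e' : s1 - s2 = a2 - a1.
    by rewrite -[s1](addrK a1) e addrAC (addrAC s2) subrr add0r.
  apply/eqP; rewrite -subr_eq0; apply/eqP; apply: Adis; last exact: Ssub.
  by rewrite e'; apply: Asub.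
pose rho b := projT1 (cid (Tall b)).
have rhoP b : exists a, S (rho b) /\ A a /\ b = rho b + a.
  by have [a [Ss [Aa e]]] := projT2 (cid (Tall b)); exists a.
exists rho; split.
- move=> b1 b2.
  have [a1 [S1 [A1 e1]]] := rhoP b1; have [a2 [S2 [A2 e2]]] := rhoP b2.
  have [a3 [S3 [A3 e3]]] := rhoP (b1 - b2).
  apply: (Tunq _ _ a3 (a1 - a2) S3 (Ssub _ _ S1 S2) A3 (Asub _ _ A1 A2)).
  by rewrite -e3 {1}e1 {1}e2 opprD addrACA.
- by move=> b; have [a [Ss _]] := rhoP b.
- move=> s Ss; have [a [S1 [A1 e1]]] := rhoP s.
  by apply: (Tunq _ _ a 0 S1 Ss A1 A0); rewrite addr0 -e1.
Qed.

Local Close Scope classical_set_scope.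

Lemma lemZ (B D : zmodType) : Bassian B ->
  (forall (d : D) (m : nat), (0 < m)%N -> exists d', d' *+ m = d) ->
  (forall d : D, exists m, (0 < m)%N /\ d *+ m = 0) ->
  forall (g : {additive D -> B}) d, g d = 0.
Proof.
move=> bassB divD torD g d; apply: contrapT => gd.
pose S := fun b => exists d, b = g d.
have S0 : S 0 by exists 0; rewrite raddf0.
have Ssub : forall a b, S a -> S b -> S (a - b).
  by move=> _ _ [x ->] [y ->]; exists (x - y); rewrite raddfB.
have Sdiv : forall s p, prime p -> S s -> exists t, S t /\ t *+ p = s.
  move=> _ p pp [x ->]; have [y yE] := divD x p (prime_gt0 pp).
  by exists (g y); split; [exists y | rewrite -raddfMn yE].
have [rho [rhoB rhoS rhoid]] := lemS S0 Ssub Sdiv.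
have [m [m0 dm]] := torD d.
have exP : exists k, (0 < k)%N && (g d *+ k == 0).
  by exists m; rewrite m0 -raddfMn dm raddf0 eqxx.
case: (ex_minnP exP) => k /andP[k0 /eqP gk] kmin.
have k1 : (1 < k)%N.
  by case: k k0 gk {kmin} => [|[|k]] //= _; rewrite ?mulr1n => gd0.
have pp : prime (pdiv k) := pdiv_prime k1.
set p := pdiv k in pp.
set k' := (k %/ p)%N.
have kE : k = (k' * p)%N by rewrite divnK // pdiv_dvd.
have k'lt : (k' < k)%N by rewrite ltn_Pdiv // ?prime_gt1 // ltnW.
have k'0 : (0 < k')%N.
  by rewrite divn_gt0 ?prime_gt0 // dvdn_leq // ?pdiv_dvd // ltnW.
set e := g d *+ k'.
have e0 : e != 0.
  apply/negP => /eqP e0; have := kmin k'; rewrite k'0 -/e e0 eqxx /= => /(_ isT).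
  by rewrite leqNgt k'lt.
have ep : e *+ p = 0 by rewrite /e -mulrnA -kE.
have Se : S e by exists (d *+ k'); rewrite raddfMn.
pose eps b := b + rho b *+ p.-1.
have epsB : addP eps.
  by move=> x y; rewrite /eps rhoB mulrnBl opprD addrACA.
have idB : addP (@id B) by [].
apply: (negP e0); apply/eqP; apply: (bassB B (addf epsB) (addf idB)) => //.
- move=> y; have [t [St tp]] := Sdiv (rho y) p pp (rhoS y).
  exists (y - rho y + t); rewrite /= /addf /eps.
  rewrite (addPD rhoB) rhoB (rhoid (rho y) (rhoS y)) subrr add0r (rhoid t St).
  by rewrite -addrA -mulrS prednK ?prime_gt0 // tp subrK.
- by rewrite /= /addf /eps rhoid // -mulrS prednK ?prime_gt0 // ep.
Qed.

Lemma natzR (k : nat) : (k%:R : rat) = (k%:Z)%:~R. Proof. by []. Qed.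

Lemma padic0 p : padic_rat p 0. Proof. by exists 0%N. Qed.

Lemma padic_int p x : x \is a Num.int -> padic_rat p x.
Proof. by rewrite Qint_def => /eqP dx; exists 0%N; rewrite dx expn0. Qed.

Lemma padic_pint p x : padic_rat p x -> exists k, x * (p ^ k)%:R \is a Num.int.
Proof. by case=> k dk; exists k; rewrite natzR -dk -numqE intr_int. Qed.

Lemma pint_padic p x k : prime p -> x * (p ^ k)%:R \is a Num.int -> padic_rat p x.
Proof.
move=> pp /intrP [z hz].
have E : (numq x * (p ^ k)%:Z = z * denq x)%R.
  apply/eqP; rewrite -(eqr_int rat) !intrM numqE -natzR -hz; apply/eqP.
  by rewrite mulrAC.
have E' : (`|numq x| * p ^ k = `|z| * `|denq x|)%N.
  by have := congr1 absz E; rewrite !abszM.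
have dv : (`|denq x| %| p ^ k)%N.
  rewrite -(@Gauss_dvdr _ `|numq x|); last by rewrite coprime_sym coprime_num_den.
  by rewrite E' dvdn_mull.
case/(dvdn_pfactor _ _ pp): dv => e _ De.
by exists e; rewrite -absz_denq De.
Qed.

Lemma dvd_den_int x (m : nat) : (`|denq x| %| m)%N -> x * m%:R \is a Num.int.
Proof.
case/dvdnP=> t ->; rewrite natrM mulrCA (natzR `|denq x|) absz_denq.
by rewrite rpredM ?natr_int // -numqE intr_int.
Qed.

Lemma pintD p (x y : rat) a b : x * (p ^ a)%:R \is a Num.int -> y * (p ^ b)%:R \is a Num.int ->
  (x + y) * (p ^ (a + b))%:R \is a Num.int.
Proof.
move=> hx hy.
have -> : (x + y) * (p ^ (a + b))%:R =
  (x * (p ^ a)%:R) * (p ^ b)%:R + (y * (p ^ b)%:R) * (p ^ a)%:R.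
  by rewrite expnD natrM; ring.
by rewrite rpredD // rpredM // natr_int.
Qed.

Lemma pintM p (x : rat) k a : x * (p ^ a)%:R \is a Num.int -> (k%:~R * x) * (p ^ a)%:R \is a Num.int.
Proof. by move=> hx; rewrite -mulrA rpredM // intr_int. Qed.

Lemma padicD p (x y : rat) : prime p -> padic_rat p x -> padic_rat p y -> padic_rat p (x + y).
Proof.
move=> pp /padic_pint [a ha] /padic_pint [b hb].
exact: (pint_padic pp (pintD ha hb)).
Qed.

Lemma padicM p (x : rat) (k : int) : prime p -> padic_rat p x -> padic_rat p (k%:~R * x).
Proof.
move=> pp /padic_pint [a ha]; exact: (pint_padic pp (pintM k ha)).
Qed.

Lemma padicN p (x : rat) : prime p -> padic_rat p x -> padic_rat p (- x).
Proof. by move=> pp hx; rewrite -mulN1r -[-1]/((-1)%:~R); apply: padicM. Qed.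

Lemma divq q (x : rat) m : prime q -> padic_rat q x -> (0 < m)%N ->
  exists y, padic_rat q y /\ m%:R * y - x \is a Num.int.
Proof.
move=> qp [k dk] m0.
set z := numq x.
have q0 : (0 < q)%N := prime_gt0 qp.
have Qn0 j : (q ^ j)%:R != 0 :> rat by rewrite pnatr_eq0 -lt0n expn_gt0 q0.
have xE : x = z%:~R / (q ^ k)%:R by rewrite /z numqE dk -natzR mulfK.
have [u [v uv]] := Bezoutz m%:Z (q ^ (k + m))%:Z.
have : (gcdn m (q ^ (k + m)) %| q ^ (k + m))%N := dvdn_gcdr _ _.
case/(dvdn_pfactor _ _ qp) => e ek ge.
have em : (e <= m)%N.
  have : (q ^ e <= m)%N by rewrite -ge; apply: dvdn_leq => //; apply: dvdn_gcdl.
  by move=> h; apply: ltnW; apply: leq_trans h; apply: ltn_expl; apply: prime_gt1.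
have uv' : u%:~R * m%:R = (q ^ e)%:R
    - v%:~R * (q ^ k)%:R * (q ^ e)%:R * (q ^ (m - e))%:R :> rat.
  have qE : (q ^ (k + m))%:R = (q ^ k)%:R * (q ^ e)%:R * (q ^ (m - e))%:R :> rat.
    by rewrite -!natrM -!expnD -addnA subnKC.
  move/(congr1 (fun t : int => (t%:~R : rat))): uv.
  rewrite /gcdz /= ge intrD !intrM -!natzR qE => E.
  by rewrite -{1}E; ring.
exists (u%:~R * z%:~R / (q ^ (k + e))%:R); split.
  apply: (@pint_padic _ _ (k + e)%N qp).
  by rewrite divfK ?Qn0 // rpredM // intr_int.
have -> : m%:R * (u%:~R * z%:~R / (q ^ (k + e))%:R) - x
    = - (v%:~R * z%:~R * (q ^ (m - e))%:R).
  rewrite xE expnD natrM.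
  have -> : m%:R * (u%:~R * z%:~R / ((q ^ k)%:R * (q ^ e)%:R))
      = (u%:~R * m%:R) * z%:~R / ((q ^ k)%:R * (q ^ e)%:R) :> rat by ring.
  rewrite uv'; field.
  by rewrite !Qn0.
by rewrite rpredN !rpredM ?intr_int ?natr_int.
Qed.

Definition Fsc (k : int) (u : nat -> nat -> rat) := fun p i => k%:~R * u p i.

Section Model.
Variables (D : zmodType) (n : nat -> nat) (pi : (nat -> nat -> rat) -> D).
Hypothesis Hadd : forall u v, Fdom n u -> Fdom n v -> pi (Fadd u v) = pi u + pi v.
Hypothesis Hker : forall u, Fdom n u -> (pi u = 0 <-> forall p i, denq (u p i) = 1).

Lemma Fdom_map2 (h : rat -> rat -> rat) u v :
  h 0 0 = 0 ->
  (forall p x y, prime p -> padic_rat p x -> padic_rat p y -> padic_rat p (h x y)) ->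
  Fdom n u -> Fdom n v -> Fdom n (fun p i => h (u p i) (v p i)).
Proof.
move=> h0 hP [Pu Su [N1 F1]] [Pv Sv [N2 F2]]; split.
- move=> p i; case: (boolP (prime p)) => pp; first exact: hP.
  have u0 : u p i = 0 by apply: Su; left.
  have v0 : v p i = 0 by apply: Sv; left.
  by rewrite u0 v0 h0; exact: padic0.
- by move=> p i H; rewrite Su // Sv.
- exists (maxn N1 N2) => p i; rewrite geq_max => /andP[h1 h2].
  by rewrite F1 // F2.
Qed.

Lemma Fdom0 : Fdom n (fun _ _ => 0).
Proof. by split => [p i|//|]; [exact: padic0 | exists 0%N]. Qed.

Lemma FdomD u v : Fdom n u -> Fdom n v -> Fdom n (Fadd u v).
Proof. by apply: Fdom_map2; [rewrite addr0 | move=> *; apply: padicD]. Qed.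

Lemma FdomB u v : Fdom n u -> Fdom n v -> Fdom n (fun p i => u p i - v p i).
Proof.
apply: (@Fdom_map2 (fun x y => x - y)); first by rewrite subr0.
by move=> p x y pp hx hy; apply: padicD => //; apply: padicN.
Qed.

Lemma FdomS k u : Fdom n u -> Fdom n (Fsc k u).
Proof.
move=> Fu; have H := @Fdom_map2 (fun x _ => k%:~R * x) u u (mulr0 _).
by apply: (H _ Fu Fu) => p x y pp hx _; exact: padicM.
Qed.

Lemma pi0 u : Fdom n u -> (forall p i, u p i \is a Num.int) -> pi u = 0.
Proof. by move=> Fu H; apply/(Hker Fu) => p i; apply/eqP; rewrite -Qint_def. Qed.

Lemma pi_eqint u v : Fdom n u -> Fdom n v ->
  (forall p i, u p i - v p i \is a Num.int) -> pi u = pi v.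
Proof.
move=> Fu Fv H; have Fw := FdomB Fu Fv.
have -> : u = Fadd v (fun p i => u p i - v p i).
  by apply: funext => p; apply: funext => i; rewrite /Fadd addrC subrK.
by rewrite Hadd // (pi0 Fw) ?addr0.
Qed.

Lemma pi_sc k u : Fdom n u -> pi (Fsc k u) = pi u *~ k.
Proof.
move=> Fu.
have Hn m : pi (Fsc m%:Z u) = pi u *+ m.
  elim: m => [|m IH].
    by apply: pi0; [exact: FdomS | move=> p i; rewrite /Fsc mul0r rpred0].
  rewrite mulrS -IH -Hadd //; last exact: FdomS.
  apply: pi_eqint; [exact: FdomS | exact: FdomD (FdomS _ Fu) | ].
  move=> p i; rewrite /Fsc /Fadd -!natzR mulrS mulrDl mul1r subrr rpred0 //.
case: k => m; first by rewrite Hn pmulrn.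
have : pi (Fsc (Negz m) u) + pi (Fsc m.+1%:Z u) = 0.
  rewrite -Hadd; [|exact: FdomS|exact: FdomS].
  apply: (@pi0 (Fadd (Fsc (Negz m) u) (Fsc m.+1%:Z u))); first by apply: FdomD; apply: FdomS.
  by move=> p i; rewrite /Fadd /Fsc -mulrDl NegzE intrN addNr mul0r rpred0.
rewrite Hn => /eqP; rewrite addr_eq0 => /eqP ->.
by rewrite NegzE mulrNz -pmulrn.
Qed.

Lemma pi_comb (I : Type) (r : seq I) (a : I -> int) (V : I -> nat -> nat -> rat) :
  (forall k, Fdom n (V k)) ->
  Fdom n (fun p i => \sum_(k <- r) (a k)%:~R * V k p i) /\
  pi (fun p i => \sum_(k <- r) (a k)%:~R * V k p i) = \sum_(k <- r) pi (V k) *~ a k.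
Proof.
move=> FV; elim: r => [|k r [IHF IHp]].
  have -> : (fun p i => \sum_(k <- [::]) (a k)%:~R * V k p i) = (fun _ _ => 0).
    by apply: funext => p; apply: funext => i; rewrite big_nil.
  by rewrite big_nil; split; [exact: Fdom0 | apply: pi0; [exact: Fdom0 | move=> *; exact: rpred0]].
have -> : (fun p i => \sum_(j <- k :: r) (a j)%:~R * V j p i) =
    Fadd (Fsc (a k) (V k)) (fun p i => \sum_(j <- r) (a j)%:~R * V j p i).
  by apply: funext => p; apply: funext => i; rewrite big_cons.
split; first by apply: FdomD => //; apply: FdomS.
rewrite Hadd; [|exact: FdomS|exact: IHF].
by rewrite pi_sc // IHp big_cons.
Qed.

Lemma den_clear u (P : pred nat) : Fdom n u ->
  exists m : nat, [/\ (0 < m)%N, (forall q i, P q -> m%:R * u q i \is a Num.int)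
     & (forall p, prime p -> ~~ P p -> coprime m p)].
Proof.
case=> Pu Su [N FN].
exists (\prod_(q < N | P q) \prod_(i < n q) `|denq (u q i)|)%N; split.
- by apply: prodn_gt0 => q; apply: prodn_gt0 => i; rewrite absz_gt0 denq_neq0.
- move=> q i Pq; case: (ltnP q N) => qN; last by rewrite FN // mulr0 rpred0.
  case: (ltnP i (n q)) => iq; last by rewrite Su ?mulr0 ?rpred0 //; right.
  rewrite mulrC; apply: dvd_den_int.
  rewrite (bigD1 (Ordinal qN)) //= (bigD1 (Ordinal iq)) //= -mulnA.
  exact: dvdn_mulr.
- move=> p pp nP; elim/big_ind: _ => [|x y|]; first exact: coprime1n.
    by rewrite coprimeMl => -> ->.
  move=> q Pq; elim/big_ind: _ => [|x y|]; first exact: coprime1n.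
    by rewrite coprimeMl => -> ->.
  move=> i _; case: (boolP (prime q)) => qp.
    case: (Pu q i) => k dk; rewrite dk /=; apply: coprimeXl.
    rewrite prime_coprime // dvdn_prime2 //; apply/eqP => qp'.
    by rewrite -qp' Pq in nP.
  by rewrite Su; [exact: coprime1n | left].
Qed.

Lemma pi_tor u : Fdom n u -> exists m, (0 < m)%N /\ pi u *+ m = 0.
Proof.
move=> Fu; have [m [m0 H _]] := den_clear predT Fu.
exists m; split => //; rewrite pmulrn -pi_sc //.
by apply: pi0; [exact: FdomS | move=> p i; rewrite /Fsc -natzR; exact: H].
Qed.

Lemma pi_div u m : Fdom n u -> (0 < m)%N -> exists v, Fdom n v /\ pi v *+ m = pi u.
Proof.
move=> Fu m0.
have tot q x : exists y, (prime q -> padic_rat q x ->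
    padic_rat q y /\ m%:R * y - x \is a Num.int) /\ (x = 0 -> y = 0).
  have [->|x0] := eqVneq x 0; first by exists 0; split => // _ _;
    split; [exact: padic0 | rewrite mulr0 subr0 rpred0].
  case: (boolP (prime q)) => qp; last by exists 0; split => // /negP.
  have [Px|nPx] := pselect (padic_rat q x); last by exists 0; split.
  have [y [Py Hy]] := divq qp Px m0; exists y; split => // /eqP.
  by rewrite (negbTE x0).
pose v q i := projT1 (cid (tot q (u q i))).
have vP q i : (prime q -> padic_rat q (u q i) ->
    padic_rat q (v q i) /\ m%:R * v q i - u q i \is a Num.int) /\ (u q i = 0 -> v q i = 0).
  exact: projT2 (cid (tot q (u q i))).
case: (Fu) => Pu Su [N FN].
have Fv : Fdom n v.
  split.
  - move=> q i; case: (boolP (prime q)) => qp; first by case: (vP q i) => H _; case: (H qp (Pu q i)).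
    by case: (vP q i) => _ ->; [exact: padic0 | apply: Su; left].
  - by move=> q i H; case: (vP q i) => _ ->; [|apply: Su].
  - by exists N => q i qN; case: (vP q i) => _ ->; [|apply: FN].
exists v; split => //; rewrite pmulrn -pi_sc //; apply: pi_eqint => //; first exact: FdomS.
move=> q i; rewrite /Fsc -natzR; case: (boolP (prime q)) => qp.
  by case: (vP q i) => H _; case: (H qp (Pu q i)).
have u0 : u q i = 0 by apply: Su; left.
by case: (vP q i) => _ ->; rewrite // u0 mulr0 subr0 rpred0.
Qed.

End Model.

Lemma std_tor (D : zmodType) : StdDivisible D ->
  forall d : D, exists m, (0 < m)%N /\ d *+ m = 0.
Proof.
move=> [n [pi [Hadd Hsurj Hker]]] d; have [u [Fu <-]] := Hsurj d.
exact: (pi_tor Hadd Hker Fu).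
Qed.

Lemma std_div (D : zmodType) : StdDivisible D ->
  forall (d : D) (m : nat), (0 < m)%N -> exists d', d' *+ m = d.
Proof.
move=> [n [pi [Hadd Hsurj Hker]]] d m m0; have [u [Fu <-]] := Hsurj d.
have [v [Fv E]] := pi_div Hadd Hker Fu m0; by exists (pi v).
Qed.

Lemma prim_rel (N M : nat) (X : 'M[rat]_(N, M)) p (k0 : 'I_N) : prime p ->
  forall m (a : 'I_N -> int), (`|a k0| <= m)%N -> a k0 != 0 ->
  (forall l, \sum_k (a k)%:~R * X k l = 0) ->
  exists a' : 'I_N -> int, (forall l, \sum_k (a' k)%:~R * X k l = 0) /\
     exists k, ~~ (p%:Z %| a' k)%Z.
Proof.
move=> pp; elim=> [|m IH] a am a0 Ra.
  by move: a0; rewrite -absz_eq0 -leqn0 am.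
have [[k nk]|allp] := pselect (exists k, ~~ (p%:Z %| a k)%Z).
  by exists a; split => //; exists k.
have dv k : (p%:Z %| a k)%Z.
  by apply: contrapT => h; apply: allp; exists k; apply/negP.
pose a' k := (a k %/ p)%Z.
have aE k : a k = a' k * p by rewrite divzK.
have a'0 : a' k0 != 0 by apply: contraNneq a0 => h; rewrite aE h mul0r.
apply: (IH a') => //.
- have E : (`|a k0| = `|a' k0| * p)%N.
    by have := congr1 absz (aE k0); rewrite abszM /=; exact: id.
  rewrite -ltnS; apply: leq_trans am; rewrite E -{1}[(`|a' k0|)%N]muln1.
  by rewrite ltn_pmul2l ?prime_gt1 // absz_gt0.
- move=> l; have := Ra l.
  rewrite (eq_bigr (fun k => (a' k)%:~R * X k l * p%:R)); last first.
    by move=> k _; rewrite aE intrM -natzR mulrAC.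
  rewrite -mulr_suml => /eqP; rewrite mulf_eq0 pnatr_eq0 (gtn_eqF (prime_gt0 pp)) orbF.
  by move/eqP.
Qed.

Lemma int_rel (N M : nat) (X : 'M[rat]_(N, M)) p : prime p -> (M < N)%N ->
  exists a : 'I_N -> int, (forall l, \sum_k (a k)%:~R * X k l = 0) /\
     exists k, ~~ (p%:Z %| a k)%Z.
Proof.
move=> pp MN.
have nf : ~~ row_free X.
  by rewrite /row_free neq_ltn (leq_ltn_trans (rank_leq_col X) MN).
have knz : kermx X != 0 by rewrite kermx_eq0.
have [i0 [j0 nz]] : exists i0 j0, kermx X i0 j0 != 0.
  case: (pselect (exists i0 j0, kermx X i0 j0 != 0)) => // Hn.
  exfalso; move/negP: knz; apply; apply/eqP; apply/matrixP; rewrite /eqrel => i j; rewrite [RHS]mxE.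
  apply/eqP; apply: contrapT => h; apply: Hn; exists i, j; by apply/negP.
set c := row i0 (kermx X).
have cX : c *m X = 0 by rewrite -row_mul mulmx_ker row0.
have cz l : \sum_k c 0 k * X k l = 0.
  by have := congr1 (fun A : 'M[rat]_(1, M) => A 0 l) cX; rewrite !mxE.
set den := (\prod_(k < N) `|denq (c 0%R k)|)%N.
pose a k := numq (c 0 k * den%:R).
have aE k : (a k)%:~R = c 0 k * den%:R.
  rewrite /a numqK // dvd_den_int //.
  by rewrite /den (bigD1 k) //= dvdn_mulr.
have den0 : (0 < den)%N.
  by apply: prodn_gt0 => k; rewrite absz_gt0 denq_neq0.
apply: (@prim_rel _ _ X p j0 pp `|a j0| a) => //.
- rewrite -(intr_eq0 rat) aE mulf_eq0 pnatr_eq0 negb_or -lt0n den0 andbT.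
  by rewrite /c mxE.
- move=> l; rewrite (eq_bigr (fun k => c 0 k * X k l * den%:R)).
    by rewrite -mulr_suml cz mul0r.
  by move=> k _; rewrite aE mulrAC.
Qed.

Section ModelR.
Variables (D : zmodType) (n : nat -> nat) (pi : (nat -> nat -> rat) -> D).
Hypothesis Hadd : forall u v, Fdom n u -> Fdom n v -> pi (Fadd u v) = pi u + pi v.
Hypothesis Hsurj : forall d, exists u, Fdom n u /\ pi u = d.
Hypothesis Hker : forall u, Fdom n u -> (pi u = 0 <-> forall p i, denq (u p i) = 1).

Lemma lift_p (Q : zmodType) (i : {additive D -> Q}) p u : prime p -> Fdom n u ->
  (i (pi u)) *+ p = 0 ->
  exists v, [/\ Fdom n v, (forall q j, q != p -> v q j = 0) & i (pi u) = i (pi v)].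
Proof.
move=> pp Fu zp.
have [M [M0 MZ Mcop]] := den_clear (fun q => q != p) Fu.
have cop : coprime M p by apply: Mcop; rewrite ?eqxx.
case: (egcdnP p M0) => km kn kE _; move: kE; rewrite (eqP cop) => kE.
pose c := (km * M)%N.
pose v q j := if q == p then c%:R * u q j else 0.
case: (Fu) => Pu Su [N FN].
have Fv : Fdom n v.
  split.
  - move=> q j; rewrite /v; case: eqP => [->|_]; last exact: padic0.
    by rewrite natzR; apply: padicM.
  - by move=> q j H; rewrite /v Su // mulr0; case: (q == p).
  - by exists N => q j qN; rewrite /v FN // mulr0; case: (q == p).
exists v; split => //.
  by move=> q j; rewrite /v => /negbTE ->.
have -> : pi v = pi (Fsc c u).
  apply: (pi_eqint Hadd Hker) => //; first exact: FdomS.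
  move=> q j; rewrite /v /Fsc -natzR; case: eqP => [_|/eqP qp].
    by rewrite subrr rpred0.
  by rewrite sub0r rpredN /c natrM -mulrA rpredM ?natr_int // MZ.
rewrite (pi_sc Hadd Hker) // -pmulrn raddfMn /c kE mulrnDr mulr1n mulnC mulrnA.
by rewrite zp mul0rn add0r.
Qed.

Lemma baseR (Q : zmodType) (i f : {additive D -> Q}) : injective f ->
  (forall d, exists d', f d = i d') ->
  forall p z, prime p -> (exists w, z = i w) -> z *+ p = 0 -> exists d, z = f d.
Proof.
move=> finj hyp p z pp [w ->] zp.
have [u [Fu uw]] := Hsurj w; rewrite -uw in zp *.
have [v0 [Fv0 S0 E0]] := lift_p pp Fu zp.
rewrite E0; rewrite E0 in zp; clear E0 uw.
set np := n p.
have p0 : (p%:R : rat) != 0 by rewrite pnatr_eq0 gtn_eqF ?prime_gt0.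
pose E (j : nat) : nat -> nat -> rat :=
  fun q l => if (q == p) && (l == j) then p%:R^-1 else 0.
have FE j : (j < np)%N -> Fdom n (E j).
  move=> jn; split.
  - move=> q l; rewrite /E; case: andP => [[/eqP -> _]|_]; last exact: padic0.
    apply: (@pint_padic _ _ 1 pp); by rewrite expn1 mulVf // rpred1.
  - move=> q l [nq|lq]; rewrite /E; case: andP => // [[/eqP qp /eqP lj]].
      by rewrite qp pp in nq.
    by move: lq; rewrite qp lj leqNgt jn.
  - exists p.+1 => q l ql; rewrite /E; case: andP => // [[/eqP qp _]].
    by move: ql; rewrite qp ltnn.
have hv : forall j : nat, exists v, [/\ Fdom n v, (forall q l, q != p -> v q l = 0) &
    ((j < np)%N -> f (pi (E j)) = i (pi v))].
  move=> j; case: (ltnP j np) => jn; last first.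
    by exists (fun _ _ => 0); split => //; exact: Fdom0.
  have Fj := FE j jn.
  have fp : f (pi (E j)) *+ p = 0.
    rewrite -raddfMn pmulrn -(pi_sc Hadd Hker) //.
    rewrite (pi0 Hker (FdomS _ Fj)) ?raddf0 // => q l; rewrite /Fsc /E -natzR.
    by case: andP => _; [rewrite mulfV // rpred1 | rewrite mulr0 rpred0].
  have [d' ed'] := hyp (pi (E j)).
  have [u' [Fu' ud']] := Hsurj d'.
  rewrite ed' -ud' in fp.
  have [v [Fv Sv Ev]] := lift_p pp Fu' fp.
  by exists v; split => // _; rewrite ed' -ud' Ev.
pose vj j := projT1 (cid (hv j)).
have vjP j : [/\ Fdom n (vj j), (forall q l, q != p -> vj j q l = 0) &
    ((j < np)%N -> f (pi (E j)) = i (pi (vj j)))] := projT2 (cid (hv j)).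
pose V (k : 'I_np.+1) := if (k : nat) == 0%N then v0 else vj k.-1.
have FV k : Fdom n (V k).
  by rewrite /V; case: eqP => _; [exact: Fv0 | case: (vjP k.-1)].
pose X := \matrix_(k < np.+1, l < np) V k p l.
have [a [Ra [k1 nk1]]] := int_rel X pp (ltnSn np).
have Rall : forall q l, \sum_k (a k)%:~R * V k q l = 0.
  move=> q l; case: (eqVneq q p) => [->|qp].
    case: (ltnP l np) => lnp.
      by have := Ra (Ordinal lnp); under eq_bigr do rewrite mxE.
    apply: big1 => k _; suff -> : V k p l = 0 by rewrite mulr0.
    by case: (FV k) => _ Sk _; apply: Sk; right.
  apply: big1 => k _; suff -> : V k q l = 0 by rewrite mulr0.
  rewrite /V; case: eqP => _; first exact: S0.
  by case: (vjP k.-1) => _ Sk _; apply: Sk.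
have [Fc Pc] := pi_comb Hadd Hker (index_enum 'I_np.+1) a FV.
have sum0 : \sum_k pi (V k) *~ a k = 0.
  by rewrite -Pc; apply: (pi0 Hker Fc) => q l; rewrite Rall rpred0.
have isum : \sum_k i (pi (V k)) *~ a k = 0.
  have := congr1 i sum0; rewrite raddf_sum raddf0 => E'; apply: (etrans _ E').
  by apply: eq_bigr => k _; rewrite raddfMz.
rewrite big_ord_recl in isum.
have V0 : V ord0 = v0 by [].
have VS (j : 'I_np) : i (pi (V (lift ord0 j))) = f (pi (E j)).
  rewrite /V lift0 /=; by case: (vjP j) => _ _ ->.
rewrite V0 (eq_bigr (fun j : 'I_np => f (pi (E j)) *~ a (lift ord0 j))) in isum; last first.
  by move=> j _; rewrite VS.
set es := \sum_(j < np) pi (E j) *~ a (lift ord0 j).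
have fes : \sum_(j < np) f (pi (E j)) *~ a (lift ord0 j) = f es.
  by rewrite raddf_sum; apply: eq_bigr => j _; rewrite raddfMz.
rewrite fes in isum.
set z0 := i (pi v0) in zp isum *.
case: (boolP (p%:Z %| a ord0)%Z) => [pa0|npa0].
  exfalso.
  have za : z0 *~ a ord0 = 0.
    by rewrite -(divzK pa0) mulrC mulrzA -pmulrn zp mul0rz.
  rewrite za add0r -(raddf0 f) in isum; move/finj: isum => es0.
  have FE' (j : 'I_np) : Fdom n (E j) := FE j (ltn_ord j).
  have [Fc' Pc'] := pi_comb Hadd Hker (index_enum 'I_np) (fun j => a (lift ord0 j)) FE'.
  move: Pc'; rewrite -/es es0 => /(Hker Fc') Hz.
  have dvj (j0 : 'I_np) : (p%:Z %| a (lift ord0 j0))%Z.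
    have := Hz p j0; rewrite (bigD1 j0) //= big1 => [|j /negbTE nj]; last first.
      rewrite /E eqxx /=; case: eqP => [/val_inj e|_]; last by rewrite mulr0.
      by rewrite e eqxx in nj.
    rewrite /E !eqxx /= addr0 => /eqP; rewrite -Qint_def => /intrP [w1 hw].
    apply/dvdzP; exists w1; apply/eqP; rewrite -(eqr_int rat) intrM -natzR -hw.
    by rewrite mulfVK.
  case: (unliftP ord0 k1) => [j ->|->] in nk1.
    by rewrite dvj in nk1.
  by rewrite pa0 in nk1.
have [u1 [v1 uv]] := Bezoutz (a ord0) p%:Z.
have g1 : gcdz (a ord0) p%:Z = 1.
  rewrite /gcdz /=; apply/eqP; rewrite -[1]/(1%N%:Z) eqz_nat.
  change (coprime (absz (a ord0)) p); by rewrite coprime_sym prime_coprime.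
rewrite g1 in uv.
exists ((- es) *~ u1); rewrite raddfMz raddfN.
have -> : - f es = z0 *~ a ord0 by apply/eqP; rewrite eq_sym -addr_eq0 isum.
rewrite -mulrzA mulrC.
have -> : (u1 * a ord0 = 1 - v1 * p%:Z)%R by rewrite -uv addrK.
by rewrite mulrzBr (mulrC v1) mulrzA -pmulrn zp mul0rz subr0 mulr1z.
Qed.

End ModelR.

Lemma lemR (D : zmodType) : StdDivisible D ->
  forall (Q : zmodType) (i f : {additive D -> Q}), injective f ->
  (forall d, exists d', f d = i d') -> forall d, exists d', i d = f d'.
Proof.
move=> sD; have divD := std_div sD; have torD := std_tor sD.
case: sD => n [pi [Hadd Hsurj Hker]] Q i f finj hyp.
have main : forall m y, (0 < m)%N -> (exists w, y = i w) -> y *+ m = 0 ->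
    exists d, y = f d.
  elim/ltn_ind => m IH y m0 [w ->] ym.
  case: (leqP m 1) => m1.
    have m1' : m = 1%N by apply/eqP; rewrite eqn_leq m1.
    by move: ym; rewrite m1' mulr1n => ->; exists 0; rewrite raddf0.
  have pp : prime (pdiv m) := pdiv_prime m1.
  set p := pdiv m in pp.
  set m' := (m %/ p)%N.
  have mE : m = (p * m')%N by rewrite mulnC divnK // pdiv_dvd.
  have m'lt : (m' < m)%N by rewrite ltn_Pdiv // ?prime_gt1 // ltnW.
  have m'0 : (0 < m')%N.
    by rewrite divn_gt0 ?prime_gt0 // dvdn_leq // ?pdiv_dvd // ltnW.
  have [x zx] : exists x, i w *+ p = f x.
    apply: (IH m' m'lt) => //; first by exists (w *+ p); rewrite raddfMn.
    by rewrite -mulrnA -mE.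
  have [x' xx'] := divD x p (prime_gt0 pp).
  have [d'' fd''] := hyp x'.
  have [x'' ex''] : exists x'', i w - f x' = f x''.
    apply: (baseR Hadd Hsurj Hker finj hyp pp).
      by exists (w - d''); rewrite raddfB fd''.
    by rewrite mulrnBl -(raddfMn f) xx' zx subrr.
  by exists (x'' + x'); rewrite raddfD -ex'' subrK.
move=> d; have [m [m0 dm]] := torD d.
apply: (main m) => //; first by exists d.
by rewrite -raddfMn dm raddf0.
Qed.
Theorem proposition4p1 (G : zmodType) : ExtBassian G -> RelHopfian G.
Proof.
move=> [B [D [phi [[psi phiK psiK] bassB stdD]]]] Q pi f C piS finj C0 Csub
  [c0 [c0C c0n0]] dec dir x0 _.
exfalso.
have Cadd : forall a b, a \in C -> b \in C -> a + b \in C.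
  move=> a b aC bC; have := Csub 0 b C0 bC; rewrite sub0r => nb.
  by have := Csub a (- b) aC nb; rewrite opprK.
have uniq : forall y1 y2 c1 c2, c1 \in C -> c2 \in C ->
    f y1 + c1 = f y2 + c2 -> y1 = y2.
  move=> y1 y2 c1 c2 h1 h2 e.
  have e' : f (y1 - y2) = c2 - c1.
    rewrite raddfB; have -> : f y1 = f y2 + c2 - c1 by rewrite -e addrK.
    by rewrite (addrAC _ (- c1)) (addrAC (f y2)) subrr add0r.
  have : f (y1 - y2) \in C by rewrite e'; exact: Csub.
  move/dir; rewrite -(raddf0 f) => /finj /eqP; rewrite subr_eq0 => /eqP //.
pose r q := projT1 (cid (dec q)).
have rP q : exists c, c \in C /\ q = f (r q) + c := projT2 (cid (dec q)).
have rf y : r (f y) = y.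
  have [c [cC e]] := rP (f y); symmetry; apply: (uniq _ _ 0 c C0 cC).
  by rewrite addr0.
have rC c : c \in C -> r c = 0.
  move=> cC; have [c' [cC' e]] := rP c; apply: (uniq _ _ c' c cC' cC).
  by rewrite -e raddf0 add0r.
have rB : addP r.
  move=> q1 q2; have [c1 [h1 e1]] := rP q1; have [c2 [h2 e2]] := rP q2.
  have [c3 [h3 e3]] := rP (q1 - q2).
  apply: (uniq _ _ c3 (c1 - c2) h3 (Csub _ _ h1 h2)).
  by rewrite -e3 raddfB {1}e1 {1}e2 opprD !addrA; congr (_ + _); rewrite addrAC.
pose be x := (phi x).1; pose de x := (phi x).2.
pose iB b := psi (b, 0); pose iD d := psi (0, d).
have psiB : addP psi.
  by move=> u v; apply: (can_inj phiK); rewrite raddfB !psiK.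
have decx x : x = iB (be x) + iD (de x).
  apply: (can_inj phiK); rewrite raddfD !psiK /be /de.
  by case: (phi x) => a b /=; rewrite -[RHS]/(a + 0, 0 + b) addr0 add0r.
have beB : addP be by move=> x y; rewrite /be raddfB.
have deB : addP de by move=> x y; rewrite /de raddfB.
have iBB : addP iB by move=> x y; rewrite /iB -psiB; congr psi; rewrite -[RHS]/(x - y, 0 - 0) subr0.
have iDB : addP iD by move=> x y; rewrite /iD -psiB; congr psi; rewrite -[RHS]/(0 - 0, x - y) subr0.
have piB : addP pi by move=> x y; rewrite raddfB.
have fB : addP f by move=> x y; rewrite raddfB.
have bediB b : be (iB b) = b by rewrite /be /iB psiK.
have bediD d : be (iD d) = 0 by rewrite /be /iD psiK.
have dediD d : de (iD d) = d by rewrite /de /iD psiK.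
pose g1 d := be (r (pi (iD d))).
have g1B : addP g1 by move=> a b; rewrite /g1 iDB piB rB beB.
have divD := std_div stdD; have torD := std_tor stdD.
have g10 d : g1 d = 0 := lemZ bassB divD torD (addf g1B) d.
pose s b := be (r (pi (iB b))).
have sB : addP s by move=> a b; rewrite /s iBB piB rB beB.
have key x : be (r (pi x)) = s (be x).
  by rewrite {1}(decx x) (addPD piB) (addPD rB) (addPD beB) -/(g1 _) g10 addr0.
have idB : addP (@id B) by [].
have sinj b : s b = 0 -> b = 0.
  move=> sb0; apply: (bassB B (addf sB) (addf idB) _ _ b sb0) => //.
  move=> b'; have [x px] := piS (f (iB b')); exists (be x).
  by rewrite /= /addf -key px rf bediB.
have ker0 x : pi x = 0 -> be x = 0.
  by move=> px; apply: sinj; rewrite -key px (addP0 rB) (addP0 beB).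
have xD x : be x = 0 -> x = iD (de x).
  by move=> bx; rewrite {1}(decx x) bx (addP0 iBB) add0r.
pose pk q := projT1 (cid (piS q)).
have pkP q : pi (pk q) = q := projT2 (cid (piS q)).
pose ka q := be (pk q).
have kaB : addP ka.
  move=> q1 q2; rewrite /ka -beB; apply/eqP; rewrite -subr_eq0 -beB; apply/eqP.
  by apply: ker0; rewrite piB pkP piB !pkP subrr.
pose g2 d := ka (f (iD d)).
have g2B : addP g2 by move=> a b; rewrite /g2 iDB fB kaB.
have g20 d : g2 d = 0 := lemZ bassB divD torD (addf g2B) d.
have phB : addP (fun d => f (iD d)) by move=> a b; rewrite iDB fB.
have ioB : addP (fun d => pi (iD d)) by move=> a b; rewrite iDB piB.
have phinj : injective (addf phB).
  move=> a b /= /finj e; by rewrite -(dediD a) -(dediD b) e.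
have hyp d : exists d', addf phB d = addf ioB d'.
  have := g20 d; rewrite /g2 /ka => /xD e; exists (de (pk (f (iD d)))).
  by rewrite /= /addf -e pkP.
have [x1 px1] := piS c0.
have bx1 : be x1 = 0 by apply: sinj; rewrite -key px1 rC // (addP0 beB).
have [d' e'] := lemR stdD phinj hyp (de x1).
have : f (iD d') \in C by rewrite -[f (iD d')]/(addf phB d') -e' /= /addf -xD // px1.
move=> /dir; rewrite -[f (iD d')]/(addf phB d') -e' /= /addf -xD // px1.
exact: c0n0.
Qed.
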